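(* Let $0<\eta<1$, $\gamma_0=0$ and $\gamma_j=(1+\eta\gamma_{j-1}^2)/2$ for $j\ge1$. Let $I_0=(0,1/4]$, and for $k\ge1$, $I_k=(\alpha_k,\beta_k]$ with $\alpha_k=2\gamma_{k+1}-1$, $\beta_k=\gamma_k^2$; for $j\ge0$ let $J_j=(\gamma_j,\gamma_{j+1}]$. Then there is no pair $(k,j)$ with $J_j\subset I_k$. Consequently each interval $I_k$ meets at most two of the intervals $J_j$.
   Context: Intervals $(a,b]$ are open on the left and closed on the right. *)

(* Defs.v *)
From HB Require Import structures.
From mathcomp Require Import all_boot all_order all_algebra.
From mathcomp Require Import boolp classical_sets reals.
Set Implicit Arguments. Unset Strict Implicit. Unset Printing Implicit Defensive.
Import Order.TTheory GRing.Theory Num.Theory.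
Local Open Scope ring_scope.
Local Open Scope classical_set_scope.

Fixpoint gamma {R : realType} (eta : R) (j : nat) : R :=
  match j with
  | O => 0
  | S j' => (1 + eta * (gamma eta j') ^+ 2) / 2
  end.

Definition alpha {R : realType} (eta : R) (k : nat) : R := 2 * gamma eta k.+1 - 1.
Definition beta {R : realType} (eta : R) (k : nat) : R := (gamma eta k) ^+ 2.

Definition ocint {R : realType} (a b : R) : set R := [set x | a < x /\ x <= b].

Definition Iint {R : realType} (eta : R) (k : nat) : set R :=
  if k is O then ocint 0 (1 / 4) else ocint (alpha eta k) (beta eta k).

Definition Jint {R : realType} (eta : R) (j : nat) : set R :=
  ocint (gamma eta j) (gamma eta j.+1).

(* Main.v *)
Require Import Defs.
From HB Require Import structures.
From mathcomp Require Import all_boot all_order all_algebra.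
From mathcomp Require Import boolp classical_sets reals.
From mathcomp Require Import ring lra.
Import Order.TTheory GRing.Theory Num.Theory.
Local Open Scope ring_scope.
Local Open Scope classical_set_scope.

Section S.
Variables (R : realType) (eta : R) (heta0 : 0 < eta) (heta1 : eta < 1).

Lemma gS j : gamma eta j.+1 = (1 + eta * (gamma eta j) ^+ 2) / 2.
Proof. by []. Qed.

Lemma g_bnd j : 0 <= gamma eta j < 1.
Proof.
elim: j => [|j /andP[h0 h1]]; first by rewrite /= lexx ltr01.
rewrite gS; apply/andP; split.
  have : 0 <= eta * gamma eta j ^+ 2 by rewrite mulr_ge0 ?sqr_ge0 ?ltW.
  lra.
have : gamma eta j ^+ 2 <= 1.
  by rewrite expr2; nra.
move=> h; have : eta * gamma eta j ^+ 2 < 1.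
  have := heta0; have := heta1; nra.
lra.
Qed.

Lemma g_inc j : gamma eta j < gamma eta j.+1.
Proof.
elim: j => [|j IH]; first by rewrite /= expr2 mulr0 mulr0 addr0; lra.
have e1 := gS j.+1; have e0 := gS j.
have h0 := g_bnd j; have h1 := g_bnd j.+1.
move/andP: h0 => [h0 _]; move/andP: h1 => [h1 _].
have : gamma eta j ^+ 2 < gamma eta j.+1 ^+ 2.
  by rewrite !expr2; nra.
move=> h; have : eta * gamma eta j ^+ 2 < eta * gamma eta j.+1 ^+ 2.
  by rewrite ltr_pM2l.
lra.
Qed.

Lemma g_mono m d : gamma eta m <= gamma eta (m + d).
Proof.
elim: d => [|d IH]; first by rewrite addn0.
rewrite addnS; apply: le_trans IH _; exact: ltW (g_inc _).
Qed.

Lemma g_le m n : (m <= n)%N -> gamma eta m <= gamma eta n.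
Proof. by move=> h; rewrite -(subnKC h); apply: g_mono. Qed.

Lemma g_half j : 1 / 2 <= gamma eta j.+1.
Proof.
rewrite gS.
have : 0 <= eta * gamma eta j ^+ 2 by rewrite mulr_ge0 ?sqr_ge0 ?ltW.
lra.
Qed.

Lemma notsub k j : ~ (Jint eta j `<=` Iint eta k).
Proof.
move=> hsub.
have hy : Jint eta j (gamma eta j.+1).
  by split; [exact: g_inc|exact: lexx].
case: k hsub => [|k] hsub.
  have [_ h] := hsub _ hy; have := g_half j; lra.
set x := gamma eta j; set y := gamma eta j.+1.
set c := gamma eta k.+1.
have hI : Iint eta k.+1 = ocint (eta * c ^+ 2) (c ^+ 2).
  rewrite /Iint /alpha /beta /c (gS k.+1); congr ocint; lra.
rewrite hI in hsub.
have [_ hyb] := hsub _ hy.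
have hx : eta * c ^+ 2 <= x.
  rewrite leNgt; apply/negP => hlt.
  pose z := Num.min y (eta * c ^+ 2).
  have hz : Jint eta j z.
    split; rewrite /z.
      by rewrite lt_min hlt andbT; exact: g_inc.
    by rewrite ge_min lexx.
  have [h _] := hsub _ hz.
  by move: h; rewrite /z lt_min ltxx andbF.
have hc1 := g_half k; have := g_bnd k.+1 => /andP[hc0 hc2].
rewrite -/c in hc1 hc0 hc2.
have hf : 2 * c - 1 < eta * c ^+ 2.
  have := g_inc k.+1; rewrite (gS k.+1) -/c; lra.
have hpos : 0 <= 2 * c - 1 by lra.
have h3 : (2 * c - 1) ^+ 3 < (eta * c ^+ 2) ^+ 3.
  apply: ltrXn2r => //; exact: hpos.
have hpoly : c ^+ 2 * (2 * c ^+ 2 - 1) <= (2 * c - 1) ^+ 3.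
  have e : (2 * c - 1) ^+ 3 - c ^+ 2 * (2 * c ^+ 2 - 1)
     = (c - 1) ^+ 2 * (- 2 * c ^+ 2 + 4 * c - 1) by ring.
  have : 0 <= (c - 1) ^+ 2 * (- 2 * c ^+ 2 + 4 * c - 1).
    apply: mulr_ge0; first exact: sqr_ge0.
    rewrite expr2; nra.
  rewrite -e; lra.
have hc0' : 0 < c ^+ 2 by rewrite expr2; nra.
have key : 2 * c ^+ 2 - 1 < eta ^+ 3 * (c ^+ 2) ^+ 2.
  have : c ^+ 2 * (2 * c ^+ 2 - 1) < c ^+ 2 * (eta ^+ 3 * (c ^+ 2) ^+ 2).
    have -> : c ^+ 2 * (eta ^+ 3 * (c ^+ 2) ^+ 2) = (eta * c ^+ 2) ^+ 3 by ring.
    lra.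
  by rewrite ltr_pM2l.
have hy2 : gamma eta j.+1 = (1 + eta * x ^+ 2) / 2 by [].
have hxx : (eta * c ^+ 2) ^+ 2 <= x ^+ 2.
  have hp : 0 <= eta * c ^+ 2 by rewrite mulr_ge0 ?ltW.
  rewrite [in X in _ <= X]expr2 [in X in X <= _]expr2; nra.
have : eta * (eta * c ^+ 2) ^+ 2 <= eta * x ^+ 2 by rewrite ler_pM2l.
have -> : eta * (eta * c ^+ 2) ^+ 2 = eta ^+ 3 * (c ^+ 2) ^+ 2 by ring.
lra.
Qed.

End S.

Theorem mainTheorem15 (R : realType) (eta : R) (heta0 : 0 < eta) (heta1 : eta < 1) :
  (forall k j : nat, ~ (Jint eta j `<=` Iint eta k)) /\
  (forall k j1 j2 j3 : nat, (j1 < j2)%N -> (j2 < j3)%N ->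
     ~ [/\ Iint eta k `&` Jint eta j1 !=set0,
           Iint eta k `&` Jint eta j2 !=set0 &
           Iint eta k `&` Jint eta j3 !=set0]).
Proof.
split; first by move=> k j; exact: notsub.
move=> k j1 j2 j3 h12 h23 [[z1 [hI1 hJ1]] _ [z3 [hI3 hJ3]]].
apply: (@notsub R eta heta0 heta1 k j2).
have [a [b hab]] : exists a b, Iint eta k = ocint a b.
  by case: k hI1 hI3 => [|k] _ _; [exists 0, (1/4)|exists (alpha eta k.+1), (beta eta k.+1)].
rewrite hab in hI1 hI3 *.
move=> z [hz1 hz2]; case: hI1 => ha1 _; case: hI3 => _ hb3.
case: hJ1 => _ h1; case: hJ3 => h3 _.
have m1 := @g_le R eta heta0 heta1 _ _ h12. have m3 := @g_le R eta heta0 heta1 _ _ h23.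
split; lra.
Qed.
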